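(* For all $n\ge 1$, $\left|\mathrm{Av}_n[\overline{14}32]\right|=C_{n-1}$, where $C_m=\frac{1}{m+1}\binom{2m}{m}$ is the $m$th Catalan number.
   Context: For $\sigma\in S_n$, the cyclic permutation $[\sigma]$ is the set of all rotations of $\sigma$; $[S_n]$ is the set of cyclic permutations of length $n$. $[\sigma]$ contains the vincular pattern $[\overline{14}32]$ if some rotation of $\sigma$ has entries $a,b,c,d$ appearing in this order with $a,b$ adjacent and $a<d<c<b$; $\mathrm{Av}_n[\overline{14}32]$ is the set of $[\sigma]\in[S_n]$ not containing it. *)

(* Defs.v *)
From mathcomp Require Import all_boot all_fingroup.
Set Implicit Arguments. Unset Strict Implicit. Unset Printing Implicit Defensive.

(* One-line notation of s in S_n (values 0..n-1 instead of 1..n; only the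
   relative order matters for pattern containment). *)
Definition word n (s : 'S_n) : seq nat := [seq val (s i) | i <- enum 'I_n].

(* w contains the vincular pattern [14]32 (linearly): entries a,b,c,d at
   positions i, i+1, k, l with i+1 < k < l and a < d < c < b. *)
Definition contains_14_32 (w : seq nat) : bool :=
  [exists i : 'I_(size w), [exists k : 'I_(size w), [exists l : 'I_(size w),
     [&& i.+1 < k, k < l,
         nth 0 w i < nth 0 w l, nth 0 w l < nth 0 w k
       & nth 0 w k < nth 0 w i.+1]]]].

Definition cyc n (s : 'S_n) : {set 'S_n} :=
  [set t : 'S_n | [exists k : 'I_n, word t == rot k (word s)]].

Definition cyc_contains n (s : 'S_n) : bool :=
  [exists k : 'I_n, contains_14_32 (rot k (word s))].

Definition Av_cyc n : {set {set 'S_n}} :=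
  [set cyc s | s in [set s : 'S_n | ~~ cyc_contains s]].

Definition catalan (m : nat) : nat := 'C(m.*2, m) %/ m.+1.

(* Main.v *)
Require Import Defs.
From mathcomp Require Import all_boot all_fingroup.
From mathcomp Require Import zify.
Set Implicit Arguments. Unset Strict Implicit. Unset Printing Implicit Defensive.


Fixpoint L (d k : nat) : nat :=
  match d with 0 => 1 | d'.+1 => sumn [seq L d' j | j <- iota 2 k] end.

Lemma LSE d k : L d.+1 k = sumn [seq L d j | j <- iota 2 k]. Proof. by []. Qed.

Lemma L_S d k : L d.+1 k.+1 = L d.+1 k + L d k.+2.
Proof.
have E : iota 2 k.+1 = iota 2 k ++ [:: k.+2] by rewrite -[k.+1]addn1 iotaD /= add2n addn1.
by rewrite !LSE E map_cat sumn_cat /= addn0.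
Qed.

Lemma L1 k : L 1 k = k.
Proof. by elim: k => [|k IH] //; rewrite L_S IH addn1. Qed.

Lemma L_closed d : forall k, L d.+1 k.+1 + 'C((d.*2 + k).+2, d) = 'C((d.*2 + k).+2, d.+1).
Proof.
elim: d => [|d IH] k.
  rewrite L1 bin0 bin1 /=; lia.
have H2 : forall j, L d.+1 j.+1 = 'C((d.*2 + j).+2, d.+1) - 'C((d.*2 + j).+2, d).
  move=> j; have := IH j; lia.
have Ld0 : L d.+2 0 = 0 by [].
elim: k => [|k IHk].
  rewrite L_S Ld0 add0n.
  have E : d.+1.*2.+2 = (d.*2 + 1).+3 by rewrite doubleS; lia.
  rewrite addn0 E (binS (d.*2 + 1).+2 d) (binS (d.*2 + 1).+2 d.+1).
  have Hs : 'C((d.*2 + 1).+2, d.+2) = 'C((d.*2 + 1).+2, d.+1).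
    have -> : d.+2 = (d.*2 + 1).+2 - d.+1 by rewrite -addnn; lia.
    by rewrite bin_sub // -addnn; lia.
  have := IH 1; lia.
rewrite L_S.
have E : (d.+1.*2 + k.+1).+2 = (d.*2 + k.+4).+1 by rewrite doubleS; lia.
have E2 : (d.+1.*2 + k).+2 = (d.*2 + k.+4) by rewrite doubleS; lia.
move: IHk; rewrite E E2 (binS (d.*2 + k.+4) d) (binS (d.*2 + k.+4) d.+1) => IHk.
have := IH k.+2.
have -> : (d.*2 + k.+2).+2 = d.*2 + k.+4 by lia.
lia.
Qed.

Lemma L_catalan d : L d 1 = catalan d.
Proof.
case: d => [|d]; first by rewrite /catalan.
have := L_closed d 0; rewrite addn0 => H.
rewrite /catalan.
have E : (d.+1).*2 = (d.*2).+2 by rewrite doubleS.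
rewrite E.
have M := mul_bin_left (d.*2).+2 d.
have E3 : d.*2.+2 - d = d.+2 by rewrite -addnn; lia.
rewrite E3 in M.
move: M; rewrite -H => M.
have -> : L d.+1 1 + 'C(d.*2.+2, d) = L d.+1 1 * d.+2 by nia.
by rewrite mulnK.
Qed.


Definition rest (w : seq nat) (e : nat) := behead (rot (index e w) w).

Lemma rot_index w e : e \in w -> rot (index e w) w = e :: rest w e.
Proof.
move=> ew; rewrite /rest /rot (drop_nth 0); last by rewrite index_mem.
by rewrite nth_index.
Qed.

Lemma rest_rot w j e r : uniq w -> rot j w = e :: r -> rest w e = r.
Proof.
move=> uw; case: (leqP (size w) j) => hj.
  rewrite rot_oversize // => ->; by rewrite /rest /= eqxx rot0.
move=> H.
have ej : nth 0 w j = e.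
  move: H; rewrite /rot (drop_nth 0) //; by case.
have ij : index e w = j by rewrite -ej index_uniq.
by rewrite /rest ij H.
Qed.

Lemma rest_cat x e y : uniq (x ++ e :: y) -> rest (x ++ e :: y) e = y ++ x.
Proof. by move=> u; apply: (rest_rot (j := size x)) => //; rewrite rot_size_cat. Qed.

Lemma rot_norm (w : seq nat) j : j <= size w -> 0 < size w -> exists2 j', j' < size w & rot j w = rot j' w.
Proof.
move=> h p; case: (ltngtP j (size w)) => hj; first by exists j.
  by move: h; rewrite leqNgt hj.
by exists 0 => //; rewrite hj rot_size rot0.
Qed.

Lemma rotrot (w : seq nat) j k : j <= size w -> k <= size w -> exists2 j', j' <= size w & rot j (rot k w) = rot j' w.
Proof.
move=> hj hk; rewrite rot_add_mod //.
case: ifP => h; first by exists (j + k).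
by exists (j + k - size w) => //; lia.
Qed.

Lemma rest_cycle w e a u v : uniq w -> e \in w -> rest w e = u ++ a :: v -> rest w a = v ++ e :: u.
Proof.
move=> uw ew H.
have R := rot_index ew; rewrite H in R.
have : rot (size (e :: u)) (rot (index e w) w) = a :: v ++ e :: u.
  by rewrite R -cat_cons rot_size_cat.
have s1 : size (e :: u) <= size w.
  by rewrite -(size_rot (index e w) w) R /= ltnS size_cat leq_addr.
have s2 : index e w <= size w by rewrite index_size.
have [j' _ ->] := rotrot s1 s2.
by move/(rest_rot uw).
Qed.

Lemma rest_rotinv w k e : uniq w -> e \in w -> rest (rot k w) e = rest w e.
Proof.
move=> uw ew; case: (leqP k (size w)) => hk; last by rewrite rot_oversize // ltnW.
have ew' : e \in rot k w by rewrite mem_rot.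
have R := rot_index ew'.
have s1 : index e (rot k w) <= size w by rewrite -(size_rot k w) index_size.
have [j' _ E] := rotrot s1 hk.
rewrite E in R.
by rewrite (rest_rot uw R).
Qed.

Lemma perm_rest w e : e \in w -> perm_eq w (e :: rest w e).
Proof. by move=> ew; rewrite -rot_index // perm_sym perm_rot. Qed.


Definition Qb (e b c d : nat) : bool := ~~ [&& e < d, d < c & c < b].
Definition badat w e := if rest w e is b :: r then ~~ pairwise (Qb e b) r else false.
Definition bad w := has (badat w) w.
Definition Qa (e c d : nat) : bool := ~~ ((e < d) && (d < c)).
Definition actp w e := pairwise (Qa e) (rest w e).

Lemma pairwise_neutral (r : rel nat) s1 m s2 :
  (forall z, r z m) -> (forall z, r m z) -> pairwise r (s1 ++ m :: s2) = pairwise r (s1 ++ s2).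
Proof.
move=> h1 h2; elim: s1 => [|x s1 IH] /=.
  by rewrite (eq_all (a2 := predT)) ?all_predT.
by rewrite IH !all_cat /= h1.
Qed.

Lemma pairwise_ins (r : rel nat) s1 m s2 :
  all (fun z => r z m) s1 -> pairwise r (s1 ++ m :: s2) = pairwise r (s1 ++ s2) && all (r m) s2.
Proof.
elim: s1 => [|x s1 IH] /=; first by rewrite andbC.
case/andP => h1 h2; rewrite IH // !all_cat /= h1 /=.
by rewrite -!andbA; congr (_ && _); rewrite andbC -andbA; congr (_ && _); rewrite andbC.
Qed.

Lemma perm_ins (x : seq nat) a m y : perm_eq (x ++ a :: m :: y) (m :: x ++ a :: y).
Proof.
have -> : x ++ a :: m :: y = (x ++ [:: a]) ++ [:: m] ++ y by rewrite -catA.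
by rewrite perm_catCA /= -catA.
Qed.

Lemma uniq_ins (x : seq nat) a m y : uniq (x ++ a :: m :: y) = (m \notin x ++ a :: y) && uniq (x ++ a :: y).
Proof. by rewrite (perm_uniq (perm_ins x a m y)). Qed.

Lemma rest_ins_other (x : seq nat) a y m e : uniq (x ++ a :: m :: y) -> e \in x ++ y ->
  exists u v, rest (x ++ a :: y) e = u ++ a :: v /\ rest (x ++ a :: m :: y) e = u ++ a :: m :: v.
Proof.
move=> U; have U' : uniq (x ++ a :: y) by move: U; rewrite uniq_ins => /andP[].
rewrite mem_cat => /orP[] He.
  case/splitPr: He U U' => x1 x2 U U'.
  exists x2, (y ++ x1); split.
    by move: U'; rewrite -catA /= => U'; rewrite rest_cat // -catA.
  by move: U; rewrite -catA /= => U; rewrite rest_cat // -catA.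
case/splitPr: He U U' => y1 y2 U U'.
exists (y2 ++ x), y1; split.
  have -> : x ++ a :: y1 ++ e :: y2 = (x ++ a :: y1) ++ e :: y2 by rewrite -catA.
  by rewrite rest_cat ?catA // -catA.
have -> : x ++ a :: m :: y1 ++ e :: y2 = (x ++ a :: m :: y1) ++ e :: y2 by rewrite -catA.
by rewrite rest_cat ?catA // -catA.
Qed.

Lemma pairwise_true (r : rel nat) s : (forall c d, r c d) -> pairwise r s.
Proof. by move=> h; elim: s => //= x s ->; rewrite andbT; apply/allP. Qed.

Lemma Qb_neutral e b m s1 s2 : b < m ->
  pairwise (Qb e b) (s1 ++ m :: s2) = pairwise (Qb e b) (s1 ++ s2).
Proof.
move=> bm; apply: pairwise_neutral => z; rewrite /Qb; apply/negP; case/and3P; lia.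
Qed.

Lemma badat_act w a : badat w a -> ~~ actp w a.
Proof.
rewrite /badat /actp; case: (rest w a) => // b r /negP H; apply/negP => /= /andP[_ P].
apply: H; apply: sub_pairwise P => c d; rewrite /Qa /Qb; apply: contra; case/and3P => -> -> //.
Qed.

Lemma bad_ins (x : seq nat) a y m : uniq (x ++ a :: y) -> all (fun z => z < m) (x ++ a :: y) ->
  bad (x ++ a :: m :: y) = bad (x ++ a :: y) || ~~ actp (x ++ a :: y) a.
Proof.
move=> U A.
have mw : m \notin x ++ a :: y by apply/negP => /(allP A); rewrite ltnn.
have Us : uniq (x ++ a :: m :: y) by rewrite uniq_ins mw U.
have am : a < m by apply: (allP A); rewrite mem_cat inE eqxx orbT.
have memw : (x ++ a :: y) =i a :: x ++ y by apply: perm_mem; rewrite perm_sym (perm_catCA [:: a] x y).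
have mems : (x ++ a :: m :: y) =i m :: a :: x ++ y.
  move=> z; rewrite (perm_mem (perm_ins x a m y)) inE memw inE //.
rewrite /bad (eq_has_r mems) (eq_has_r memw) /=.
have -> : badat (x ++ a :: m :: y) m = false.
  have -> : x ++ a :: m :: y = (x ++ [:: a]) ++ m :: y by rewrite -catA.
  rewrite /badat rest_cat; last by rewrite -catA.
  have Ay : all (fun z => z < m) (y ++ x ++ [:: a]).
    by apply/allP => z hz; apply: (allP A); rewrite memw inE mem_cat; move: hz; rewrite !mem_cat inE; case/or3P => ->; rewrite ?orbT.
  case: (y ++ x ++ [:: a]) Ay => // b r /andP[bm _].
  apply/negbF/pairwise_true => c d; rewrite /Qb; apply/negP; case/and3P; lia.
have -> : badat (x ++ a :: m :: y) a = ~~ actp (x ++ a :: y) a.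
  rewrite /badat /actp rest_cat // rest_cat //.
  congr (~~ _); apply: (@eq_in_pairwise _ (fun z => z < m)).
    by move=> c d hc hd; rewrite /Qb /Qa (_ : c < m = true) ?andbT.
  by apply/allP => z hz; apply: (allP A); rewrite memw inE mem_cat; move: hz; rewrite mem_cat; case/orP => ->; rewrite ?orbT.
have -> : has (badat (x ++ a :: m :: y)) (x ++ y) = has (badat (x ++ a :: y)) (x ++ y).
  apply: eq_in_has => e he.
  have [u [v [E1 E2]]] := rest_ins_other Us he.
  rewrite /badat E1 E2.
  case: u E1 E2 => [|b u] E1 E2 /=.
    by have := Qb_neutral e [::] v am; rewrite /= => ->.
  have ew : e \in x ++ a :: y by rewrite memw inE he orbT.
  have bm : b < m by apply: (allP A); rewrite (perm_mem (perm_rest ew)) inE E1 inE eqxx orbT.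
  by have := Qb_neutral e (u ++ [:: a]) v bm; rewrite -!catA /= => ->.
have := @badat_act (x ++ a :: y) a.
by case: (badat _ a); case: (actp _ a); case: (has _ _) => // /(_ isT).
Qed.

Lemma pairwise_allT (r : rel nat) (P : pred nat) s : all P s -> (forall c d, P c -> P d -> r c d) -> pairwise r s.
Proof.
move=> A h; elim: s A => //= x s IH /andP[px ps]; rewrite IH // andbT.
by apply/allP => z zs; apply: h => //; apply: (allP ps).
Qed.

Lemma uniq_rest w e : uniq w -> e \in w -> uniq (rest w e).
Proof. by move=> U ew; move: U; rewrite (perm_uniq (perm_rest ew)) => /andP[]. Qed.

Lemma mem_rest w e z : e \in w -> z \in rest w e -> z \in w.
Proof. by move=> ew zr; rewrite (perm_mem (perm_rest ew)) inE zr orbT. Qed.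

Lemma ins_uniq (x : seq nat) a y m : uniq (x ++ a :: y) -> all (fun z => z < m) (x ++ a :: y) ->
  uniq (x ++ a :: m :: y).
Proof.
move=> U A; rewrite uniq_ins U andbT; by apply/negP => /(allP A); rewrite ltnn.
Qed.

Lemma act_ins_m (x : seq nat) a y m : uniq (x ++ a :: y) -> all (fun z => z < m) (x ++ a :: y) ->
  actp (x ++ a :: m :: y) m.
Proof.
move=> U A; have Us := ins_uniq U A.
move: Us; have -> : x ++ a :: m :: y = (x ++ [:: a]) ++ m :: y by rewrite -catA.
move=> Us; rewrite /actp rest_cat //.
apply: (pairwise_allT (P := fun z => z < m)).
  by apply/allP => z hz; apply: (allP A); move: hz; rewrite !mem_cat !inE; case/or3P => ->; rewrite ?orbT.
by move=> c d _ hd; rewrite /Qa; apply/negP => /andP[h1 h2]; lia.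
Qed.

Lemma act_ins_full (x : seq nat) a y m M e :
  uniq (x ++ a :: y) -> all (fun z => z < m) (x ++ a :: y) ->
  M \in x ++ a :: y -> all (fun z => z <= M) (x ++ a :: y) ->
  actp (x ++ a :: y) a -> e \in x ++ a :: y ->
  actp (x ++ a :: m :: y) e = actp (x ++ a :: y) e && ((a == M) || (a < e)).
Proof.
move=> U A MW AM acta ew.
have Us := ins_uniq U A.
have aw : a \in x ++ a :: y by rewrite mem_cat inE eqxx orbT.
have lem : forall z, z \in x ++ a :: y -> z < m by move=> z /(allP A).
have leM : forall z, z \in x ++ a :: y -> z <= M by move=> z /(allP AM).
case: (eqVneq e a) => [->|ea].
  rewrite acta /= ltnn orbF /actp rest_cat // /=.
  have Ryx : forall z, z \in y ++ x -> z \in x ++ a :: y.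
    by move=> z; rewrite !mem_cat inE => /orP[] ->; rewrite ?orbT.
  have -> : all (Qa a m) (y ++ x) = all (fun d => d <= a) (y ++ x).
    apply: eq_in_all => d /Ryx /lem dm; rewrite /Qa dm andbT; lia.
  move: acta; rewrite /actp (rest_cat U) => ->; rewrite andbT.
  case: (eqVneq a M) => [->|aM].
    by apply/allP => z /Ryx /leM.
  apply/negbTE/negP => /allP H.
  have : M \in y ++ x.
    move: MW; rewrite !mem_cat inE; case/or3P => [->|/eqP E|->]; rewrite ?orbT //.
    by move: aM; rewrite E eqxx.
  move/H => Ma; have := leM a aw; move/eqP: aM; lia.
have exy : e \in x ++ y.
  by move: ew; rewrite !mem_cat inE (negbTE ea) /=.
have [u [v [E1 E2]]] := rest_ins_other Us exy.
have auv : a \notin v.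
  by have := uniq_rest U ew; rewrite E1 cat_uniq => /and3P[_ _ /andP[]].
have vw : forall z, z \in v -> z \in x ++ a :: y.
  by move=> z zv; apply: (mem_rest ew); rewrite E1 mem_cat inE zv !orbT.
have uw : forall z, z \in u -> z \in x ++ a :: y.
  by move=> z zv; apply: (mem_rest ew); rewrite E1 mem_cat zv.
have -> : actp (x ++ a :: m :: y) e = actp (x ++ a :: y) e && all (fun d => d <= e) v.
  rewrite /actp E1 E2.
  have -> : u ++ [:: a, m & v] = (u ++ [:: a]) ++ m :: v by rewrite -catA.
  rewrite pairwise_ins; last first.
    apply/allP => z; rewrite mem_cat inE => /orP[/uw|/eqP->] => [zw|]; rewrite /Qa.
      by apply/negP => /andP[h1 h2]; have := lem z zw; lia.
    by apply/negP => /andP[h1 h2]; have := lem a aw; lia.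
  rewrite -catA /=; congr (_ && _).
  apply: eq_in_all => d /vw /lem dm; rewrite /Qa dm andbT; lia.
have Ra := rest_cycle U ew E1.
case acte: (actp (x ++ a :: y) e) => //=.
case: (ltngtP a e) => [ae|ea'|ae]; last by move: ea; rewrite ae eqxx.
- rewrite orbT; apply/allP => d dv.
  move: acta; rewrite /actp Ra pairwise_cat => /and3P[/allrelP H _ _].
  have := H d e dv; rewrite inE eqxx => /(_ isT); rewrite /Qa ae /=; lia.
- rewrite orbF.
  case: (eqVneq a M) => [aM|aM].
    apply/allP => d dv.
    move: acte; rewrite /actp E1 pairwise_cat => /and3P[_ _ /=/andP[/allP H _]].
    have := H d dv; rewrite /Qa; have := leM d (vw d dv); rewrite -aM.
    have : d != a by apply/negP => /eqP dE; move: auv; rewrite -dE dv.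
    move/eqP => da dle; apply: contraNT => ed; apply/andP; split; lia.
  apply/negbTE/negP => /allP H.
  have aM' : a < M by have := leM a aw; move/eqP: aM; lia.
  have Mr : M \in rest (x ++ a :: y) e.
    move: MW; rewrite (perm_mem (perm_rest ew)) inE => /orP[/eqP Me|//].
    by move: ea'; rewrite -Me; move: aM'; lia.
  move: Mr; rewrite E1 mem_cat inE => /or3P[Mu|/eqP Ma|Mv].
  + move: acte; rewrite /actp E1 pairwise_cat => /and3P[/allrelP H2 _ _].
    have := H2 M a Mu; rewrite inE eqxx /Qa ea' aM' => /(_ isT) //.
  + by move: aM; rewrite Ma eqxx.
  + by have := H M Mv; lia.
Qed.


Lemma exists_max (s : seq nat) : s != [::] -> exists2 M, M \in s & all (fun z => z <= M) s.
Proof.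
elim: s => // x s IH _; case: (eqVneq s [::]) => [->|sn].
  by exists x; rewrite ?inE ?eqxx //= leqnn.
have [M Ms AM] := IH sn.
case: (leqP M x) => h.
  exists x; first by rewrite inE eqxx.
  by rewrite /= leqnn /=; apply/allP => z /(allP AM) zM; apply: leq_trans h.
exists M; first by rewrite inE Ms orbT.
by rewrite /= (ltnW h).
Qed.

Lemma max_split (s : seq nat) M : uniq s -> M \in s -> all (fun z => z <= M) s ->
  forall a, a \in rem M s -> count (fun e => a < e) s = (count (fun e => a < e) (rem M s)).+1.
Proof.
move=> U Ms AM a ar.
rewrite ((seq.permP (perm_to_rem Ms)) (fun e => a < e)) /=.
have : a != M by move: ar; rewrite (mem_rem_uniq _ U) inE => /andP[].
have := allP AM a (mem_rem ar).
move=> h1 /eqP h2; have -> : a < M by lia.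
by rewrite add1n.
Qed.

Lemma rank_perm n : forall s : seq nat, size s = n -> uniq s ->
  perm_eq [seq count (fun e => a < e) s | a <- s] (iota 0 n).
Proof.
elim: n => [|n IH] s Hs U; first by case: s Hs U.
have sn : s != [::] by case: s Hs {U}.
have [M Ms AM] := exists_max sn.
have P := perm_to_rem Ms.
rewrite (perm_trans (perm_map _ P)) //=.
have -> : count (fun e => M < e) s = 0.
  apply/eqP; rewrite -leqn0 leqNgt -has_count; apply/hasPn => z /(allP AM); lia.
rewrite -[in X in perm_eq _ X](add0n 1) /= perm_cons.
have Ur : uniq (rem M s) by apply: rem_uniq.
have Sr : size (rem M s) = n by rewrite size_rem // Hs.
have -> : [seq count (fun e => a < e) s | a <- rem M s] = [seq (count (fun e => a < e) (rem M s)).+1 | a <- rem M s].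
  by apply/eq_in_map => a ar; apply: max_split.
rewrite addnC iotaDl.
have -> : [seq (count (fun e => a < e) (rem M s)).+1 | a <- rem M s] =
  map (addn 1) [seq count (fun e => a < e) (rem M s) | a <- rem M s].
  by rewrite -map_comp; apply: eq_map => a /=; rewrite add1n.
by rewrite perm_map // IH.
Qed.

Lemma label_perm (A : seq nat) m : uniq A -> m \in A -> all (fun z => z <= m) A ->
  perm_eq [seq (count (fun e => (a == m) || (a < e)) A).+1 | a <- A] (iota 2 (size A)).
Proof.
move=> U mA AM.
have P := perm_to_rem mA.
rewrite (perm_trans (perm_map _ P)) //= eqxx.
have -> : count (fun e => true || (m < e)) A = size A by rewrite (eq_count (a2 := predT)) ?count_predT.
have Sr : size A = (size (rem m A)).+1 by rewrite size_rem // prednK // (perm_size P).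
have -> : [seq (count (fun e => (a == m) || (a < e)) A).+1 | a <- rem m A] =
  map (addn 2) [seq count (fun e => a < e) (rem m A) | a <- rem m A].
  rewrite -map_comp; apply/eq_in_map => a ar /=.
  have -> : a == m = false by move: ar; rewrite (mem_rem_uniq _ U) inE => /andP[/negbTE].
  by rewrite (eq_count (a2 := fun e => a < e)) // (max_split U mA AM ar) add2n.
rewrite Sr; set k := size (rem m A).
have E : iota 2 k.+1 = iota 2 k ++ [:: k.+2] by rewrite -[k.+1]addn1 iotaD /= add2n addn1.
have E2 : iota 2 k = map (addn 2) (iota 0 k) by rewrite -iotaDl addn0.
rewrite E perm_sym cats1 perm_rcons perm_cons E2 perm_sym.
by rewrite perm_map // rank_perm // rem_uniq.
Qed.


Definition ins (w : seq nat) a := take (index a w).+1 w ++ size w :: drop (index a w).+1 w.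
Definition nact w := count (actp w) w.
Definition good m (w : seq nat) := [&& perm_eq w (iota 0 m), head 1 w == 0 & ~~ bad w].

Fixpoint G m : seq (seq nat) :=
  match m with
  | 0 => [:: [:: 0]]
  | m'.+1 => [seq ins w a | w <- G m', a <- [seq a <- w | actp w a]]
  end.

Lemma ins_cat (x : seq nat) a y : a \notin x -> ins (x ++ a :: y) a = x ++ a :: size (x ++ a :: y) :: y.
Proof.
move=> ax; rewrite /ins index_cat (negbTE ax) /= eqxx addn0.
rewrite take_cat drop_cat ltnNge leqnSn /= subSn // subnn /= take0 drop0.
by rewrite -catA.
Qed.

Lemma mem_good m w : perm_eq w (iota 0 m) -> forall z, (z \in w) = (z < m).
Proof. by move=> P z; rewrite (perm_mem P) mem_iota. Qed.

Lemma iotaSr m : perm_eq (iota 0 m.+1) (m :: iota 0 m).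
Proof. by rewrite -addn1 iotaD /= add0n cats1 perm_rcons. Qed.

Lemma ins_good m v a : good m.+1 v -> a \in v -> actp v a -> good m.+2 (ins v a).
Proof.
case/and3P => Pv Hv Bv av actv.
have Uv : uniq v by rewrite (perm_uniq Pv) iota_uniq.
have Sv : size v = m.+1 by rewrite (perm_size Pv) size_iota.
have Av : all (fun z => z < m.+1) v by apply/allP => z; rewrite (mem_good Pv).
case/splitPr: av Pv Hv Bv actv Uv Sv Av => x y Pv Hv Bv actv Uv Sv Av.
have ax : a \notin x by move: Uv; rewrite cat_uniq /= => /and3P[_ /norP[]].
rewrite /good ins_cat // Sv.
apply/and3P; split.
- apply: (perm_trans (perm_ins _ _ _ _)).
  by rewrite perm_sym (perm_trans (iotaSr _)) // perm_cons perm_sym.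
- by case: x Hv {ax Pv Bv actv Uv Sv Av}.
- by rewrite bad_ins // negb_or Bv actv.
Qed.

Lemma good_split m w : good m.+2 w -> exists x a y,
  [/\ w = x ++ a :: m.+1 :: y, good m.+1 (x ++ a :: y), actp (x ++ a :: y) a & a \notin x].
Proof.
case/and3P => Pw Hw Bw.
have Uw : uniq w by rewrite (perm_uniq Pw) iota_uniq.
have Mw : m.+1 \in w by rewrite (mem_good Pw).
case/splitPr: Mw Pw Hw Bw Uw => p1 y Pw Hw Bw Uw.
case/lastP: p1 Pw Hw Bw Uw => [|x a] Pw Hw Bw Uw; first by [].
rewrite cat_rcons in Pw Hw Bw Uw *.
have Uv : uniq (x ++ a :: y) by move: Uw; rewrite uniq_ins => /andP[].
have Av : all (fun z => z < m.+1) (x ++ a :: y).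
  apply/allP => z zv.
  have : z \in x ++ a :: m.+1 :: y by move: zv; rewrite !mem_cat !inE; case/orP => [->|/orP[->|->]]; rewrite ?orbT.
  rewrite (mem_good Pw) ltnS leq_eqVlt => /orP[/eqP E|//].
  by move: Uw; rewrite uniq_ins -E zv.
move: Bw; rewrite bad_ins // negb_or negbK => /andP[Bv actv].
exists x, a, y; split => //.
  apply/and3P; split => //.
  - have H : perm_eq (m.+1 :: x ++ a :: y) (iota 0 m.+2).
      by apply: perm_trans Pw; rewrite perm_sym perm_ins.
    by rewrite -(perm_cons m.+1); apply: perm_trans H _; apply: iotaSr.
  - by case: x Hw {Pw Uw Uv Av Bv actv}.
by move: Uv; rewrite cat_uniq /= => /and3P[_ /norP[]].
Qed.

Lemma G_mem m w : (w \in G m) = good m.+1 w.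
Proof.
elim: m w => [|m IH] w.
  rewrite inE; apply/eqP/idP => [->|]; first by [].
  case/and3P => P H _.
  have S := perm_size P; rewrite size_iota in S.
  case: w S P H => [|z [|]] //= _ P.
  by move/eqP->.
apply/idP/idP.
  case/flatten_mapP => v vG /mapP[a]; rewrite mem_filter => /andP[actv av] ->.
  by apply: ins_good => //; rewrite -IH.
move/good_split => [x [a [y [E gv actv ax]]]].
apply/flatten_mapP; exists (x ++ a :: y); first by rewrite IH.
apply/mapP; exists a; first by rewrite mem_filter actv mem_cat inE eqxx orbT.
rewrite ins_cat // E; congr (_ ++ _ :: _ :: _).
case/and3P: gv => P _ _; by rewrite (perm_size P) size_iota.
Qed.

Lemma uniq_flatten_map (S T : eqType) (f : S -> seq T) s : uniq s -> {in s, forall x, uniq (f x)} ->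
  {in s &, forall x y z, z \in f x -> z \in f y -> x = y} -> uniq (flatten (map f s)).
Proof.
elim: s => //= x s IH /andP[xs us] U D.
rewrite cat_uniq U ?inE ?eqxx // IH //; last first.
- by move=> a b ha hb; apply: D; rewrite inE ?ha ?hb orbT.
- by move=> a ha; apply: U; rewrite inE ha orbT.
rewrite andbT; apply/hasPn => z /flatten_mapP[y ys zy]; apply/negP => zx.
have := D x y; rewrite !inE eqxx ys orbT => /(_ isT isT z zx zy) E.
by move: xs; rewrite E ys.
Qed.

Lemma ins_props m v a : good m.+1 v -> a \in v ->
  index m.+1 (ins v a) = (index a v).+1 /\ filter (predC1 m.+1) (ins v a) = v.
Proof.
case/and3P => Pv _ _ av.
have Uv : uniq v by rewrite (perm_uniq Pv) iota_uniq.
have Sv : size v = m.+1 by rewrite (perm_size Pv) size_iota.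
have Av : forall z, z \in v -> z < m.+1 by move=> z; rewrite (mem_good Pv).
case/splitPr: av Uv Sv Av => x y Uv Sv Av.
have ax : a \notin x by move: Uv; rewrite cat_uniq /= => /and3P[_ /norP[]].
have Mx : m.+1 \notin x by apply/negP => h; have := Av m.+1; rewrite mem_cat h ltnn => /(_ isT).
have aM : a != m.+1 by apply/negP => /eqP E; have := Av a; rewrite mem_cat inE eqxx orbT E ltnn => /(_ isT).
rewrite ins_cat // Sv; split.
  by rewrite !index_cat (negbTE Mx) (negbTE ax) /= eqxx (negbTE aM) /= eqxx addn1 addn0.
have Fx : filter (predC1 m.+1) x = x.
  apply/all_filterP/allP => z zx; apply/negP => /eqP E; have := Av z; rewrite mem_cat zx E ltnn => /(_ isT) //.
have Fy : filter (predC1 m.+1) y = y.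
  apply/all_filterP/allP => z zx; apply/negP => /eqP E; have := Av z; rewrite mem_cat inE zx !orbT E ltnn => /(_ isT) //.
by rewrite filter_cat Fx /= eqxx /= aM Fy.
Qed.

Lemma G_uniq m : uniq (G m).
Proof.
elim: m => [|m IH] //=.
apply: uniq_flatten_map => //.
  move=> v vG; rewrite map_inj_in_uniq ?filter_uniq //.
    by move: vG; rewrite G_mem => /and3P[P _ _]; rewrite (perm_uniq P) iota_uniq.
  move=> a b; rewrite !mem_filter => /andP[_ av] /andP[_ bv] E.
  move: vG; rewrite G_mem => gv.
  have [Ia _] := ins_props gv av; have [Ib _] := ins_props gv bv.
  by move: Ia; rewrite E Ib => [[]] /(congr1 (nth 0 v)); rewrite !nth_index.
move=> v v' vG v'G z /mapP[a]; rewrite mem_filter => /andP[_ av] -> /mapP[b]; rewrite mem_filter => /andP[_ bv] E.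
rewrite !G_mem in vG v'G.
have [_ Fa] := ins_props vG av; have [_ Fb] := ins_props v'G bv.
by rewrite -Fa E Fb.
Qed.

Lemma nact_ins m v a : good m.+1 v -> a \in v -> actp v a ->
  nact (ins v a) = (count (fun e => (a == m) || (a < e)) (filter (actp v) v)).+1.
Proof.
case/and3P => Pv _ _ av actv.
have Uv : uniq v by rewrite (perm_uniq Pv) iota_uniq.
have Sv : size v = m.+1 by rewrite (perm_size Pv) size_iota.
have Av : all (fun z => z < m.+1) v by apply/allP => z; rewrite (mem_good Pv).
have Mv : m \in v by rewrite (mem_good Pv).
have AM : all (fun z => z <= m) v by apply/allP => z; rewrite (mem_good Pv).
case/splitPr: av Pv Uv Sv Av Mv AM actv => x y Pv Uv Sv Av Mv AM actv.
have ax : a \notin x by move: Uv; rewrite cat_uniq /= => /and3P[_ /norP[]].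
rewrite /nact ins_cat // Sv ((seq.permP (perm_ins x a m.+1 y)) (actp _)) /=.
rewrite act_ins_m // add1n; congr (_.+1).
rewrite count_filter; apply: eq_in_count => e ew /=.
by rewrite (act_ins_full (M := m)) // andbC.
Qed.

Lemma act_max m v : good m.+1 v -> actp v m.
Proof.
case/and3P => Pv _ _.
have Mv : m \in v by rewrite (mem_good Pv).
apply: (pairwise_allT (P := fun z => z <= m)).
  by apply/allP => z /(mem_rest Mv); rewrite (mem_good Pv).
by move=> c d _ dm; rewrite /Qa; apply/negP => /andP[h _]; lia.
Qed.

Lemma label m v d : good m.+1 v ->
  sumn [seq L d (nact (ins v a)) | a <- filter (actp v) v] = L d.+1 (nact v).
Proof.
move=> gv.
have Pv : perm_eq v (iota 0 m.+1) by case/and3P: gv.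
have Uv : uniq v by rewrite (perm_uniq Pv) iota_uniq.
have -> : [seq L d (nact (ins v a)) | a <- filter (actp v) v] =
  map (L d) [seq (count (fun e => (a == m) || (a < e)) (filter (actp v) v)).+1 | a <- filter (actp v) v].
  rewrite -map_comp; apply/eq_in_map => a; rewrite mem_filter => /andP[acta av] /=.
  by rewrite (nact_ins gv).
rewrite LSE /nact -size_filter; apply: perm_sumn; apply: perm_map; apply: label_perm.
- exact: filter_uniq.
- by rewrite mem_filter; apply/andP; split; [apply: act_max gv | rewrite (mem_good Pv)].
- by apply/allP => z; rewrite mem_filter (mem_good Pv) => /andP[_].
Qed.

Lemma G_sum m d : sumn [seq L d (nact w) | w <- G m.+1] = sumn [seq L d.+1 (nact w) | w <- G m].
Proof.
rewrite [G m.+1]/= map_flatten sumn_flatten -map_comp; congr sumn.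
rewrite -map_comp; apply/eq_in_map => v vG /=; rewrite G_mem in vG; rewrite -LSE -(label d vG).
by rewrite -map_comp.
Qed.

Lemma size_G m : size (G m) = catalan m.
Proof.
have H : forall d k, sumn [seq L d (nact w) | w <- G k] = L (k + d) 1.
  move=> d k; elim: k d => [|k IH] d; first by rewrite /= /nact /actp /rest /= add0n addn0.
  by rewrite G_sum IH addSnnS.
have := H 0 m; rewrite addn0 L_catalan => <-.
by elim: (G m) => //= w s ->.
Qed.


Lemma size_word n (s : 'S_n) : size (word s) = n.
Proof. by rewrite /word size_map size_enum_ord. Qed.

Lemma nth_word n (s : 'S_n) (i : 'I_n) : nth 0 (word s) i = s i.
Proof. by rewrite /word (nth_map i) ?size_enum_ord // nth_ord_enum. Qed.

Lemma word_uniq n (s : 'S_n) : uniq (word s).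
Proof.
rewrite /word map_inj_uniq ?enum_uniq // => i j /val_inj; apply: perm_inj.
Qed.

Lemma word_perm n (s : 'S_n) : perm_eq (word s) (iota 0 n).
Proof.
apply: uniq_perm; rewrite ?word_uniq ?iota_uniq // => x.
rewrite mem_iota add0n /=; apply/mapP/idP => [[i _ ->]|xn]; first exact: ltn_ord.
exists (s^-1 (Ordinal xn))%g; first by rewrite mem_enum.
by rewrite permKV.
Qed.

Lemma word_inj n : injective (@word n).
Proof.
move=> s t E; apply/permP => i; apply: val_inj.
by have := congr1 (fun w => nth 0 w i) E; rewrite /= !nth_word.
Qed.

Lemma word_surj n (w : seq nat) : perm_eq w (iota 0 n) -> exists s : 'S_n, word s = w.
Proof.
move=> P.
have Sw : size w = n by rewrite (perm_size P) size_iota.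
have Uw : uniq w by rewrite (perm_uniq P) iota_uniq.
have ltw : forall i : 'I_n, nth 0 w i < n.
  move=> i; have : nth 0 w i \in w by rewrite mem_nth // Sw.
  by rewrite (perm_mem P) mem_iota.
pose f := fun i : 'I_n => insubd i (nth 0 w i).
have vf : forall j, val (f j) = nth 0 w j by move=> j; rewrite val_insubd ltw.
have finj : injective f.
  move=> i j /(congr1 val); rewrite !vf => /eqP; rewrite nth_uniq ?Sw // => /eqP E; exact: val_inj.
exists (perm finj); apply: (@eq_from_nth _ 0); rewrite ?size_word ?Sw // => i iw.
by rewrite (nth_word _ (Ordinal iw)) permE vf.
Qed.

Lemma bad_rot w k : uniq w -> bad (rot k w) = bad w.
Proof.
move=> U; rewrite /bad (eq_has_r (mem_rot k w)); apply: eq_in_has => e ew.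
by rewrite /badat rest_rotinv.
Qed.

Lemma nth_dt (v : seq nat) i j : j < size v - i.+2 ->
  nth 0 (drop i.+2 v ++ take i v) j = nth 0 v (i.+2 + j).
Proof. by move=> h; rewrite nth_cat size_drop h nth_drop. Qed.

Lemma arith1 K I S : I.+1 < K -> K < S -> K - I.+2 < S - I.+2.
Proof. lia. Qed.

Lemma arith2 K L I : I.+1 < K -> K < L -> K - I.+2 < L - I.+2.
Proof. lia. Qed.

Lemma contains_bad v : uniq v -> contains_14_32 v -> bad v.
Proof.
move=> U /existsP[i /existsP[k /existsP[l /and5P[h1 h2 h3 h4 h5]]]].
have i1 : i.+1 < size v by apply: leq_trans (ltn_ord k); apply: ltnW.
have iv : i < size v := ltn_ord i.
set e := nth 0 v i; set b := nth 0 v i.+1.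
have Ev : v = take i v ++ e :: drop i.+1 v by rewrite -drop_nth // cat_take_drop.
have R : rest v e = b :: (drop i.+2 v ++ take i v).
  by rewrite {1}Ev rest_cat -?Ev // (drop_nth 0 i1).
apply/hasP; exists e; first by rewrite mem_nth.
rewrite /badat R; apply/negP => /pairwiseP H.
have lk : k - i.+2 < size v - i.+2.
  by apply: arith1 h1 (ltn_ord k).
have ll : l - i.+2 < size v - i.+2.
  by apply: arith1 (ltn_ord l); apply: ltn_trans h2.
have := H 0 (k - i.+2) (l - i.+2).
rewrite !inE !size_cat size_drop !nth_dt //.
have -> : i.+2 + (k - i.+2) = k by lia.
have -> : i.+2 + (l - i.+2) = l by lia.
rewrite /Qb h3 h4 h5 /= => HH; suff : false by []; apply: HH.
- by apply: leq_trans lk (leq_addr _ _).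
- by apply: leq_trans ll (leq_addr _ _).
- by apply: arith2.
Qed.

Lemma bad_contains v : uniq v -> bad v -> exists2 k, k < size v & contains_14_32 (rot k v).
Proof.
move=> U /hasP[e ev]; rewrite /badat.
case E: (rest v e) => [|b r] // Hnp.
exists (index e v); first by rewrite index_mem.
have R := rot_index ev; rewrite E in R; rewrite R.
apply: contraNT Hnp => Hc.
apply/(pairwiseP 0) => i j; rewrite !inE => hi hj hij.
rewrite /Qb; apply/negP => /and3P[a1 a2 a3]; move/negP: Hc; apply.
have h0 : 0 < size [:: e, b & r] by [].
have hi' : i.+2 < size [:: e, b & r] by rewrite /= !ltnS.
have hj' : j.+2 < size [:: e, b & r] by rewrite /= !ltnS.
apply/existsP; exists (Ordinal h0); apply/existsP; exists (Ordinal hi'); apply/existsP; exists (Ordinal hj').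
by rewrite /= a1 a2 a3 !ltnS hij.
Qed.

Lemma cyc_contains_bad n (s : 'S_n) : cyc_contains s = bad (word s).
Proof.
apply/existsP/idP => [[k Hk]|H].
  by rewrite -(bad_rot k (word_uniq s)); apply: contains_bad => //; rewrite rot_uniq word_uniq.
have [k kn Hk] := bad_contains (word_uniq s) H.
by rewrite size_word in kn; exists (Ordinal kn).
Qed.


Lemma rot_closed (w : seq nat) k j : 0 < size w -> j <= size w -> k <= size w ->
  exists2 j', j' < size w & rot j (rot k w) = rot j' w.
Proof.
move=> p hj hk; have [j1 h1 ->] := rotrot hj hk.
exact: rot_norm.
Qed.

Lemma rot_back (w : seq nat) k : k <= size w -> rot (size w - k) (rot k w) = w.
Proof.
move=> hk; rewrite rot_add_mod ?leq_subr // subnK // leqnn.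
by rewrite rot_size.
Qed.

Lemma cyc_rot n (s t : 'S_n) k : 0 < n -> k < n -> word t = rot k (word s) -> cyc t = cyc s.
Proof.
move=> n0 kn E; apply/setP => u; rewrite !inE.
have sz : size (word s) = n by rewrite size_word.
apply/existsP/existsP => [[j /eqP Hj]|[j /eqP Hj]].
  rewrite E in Hj.
  have [j' j'n Ej] := rot_closed (j := j) (k := k) (w := word s) (ltac:(by rewrite sz)) (ltac:(by rewrite sz ltnW)) (ltac:(by rewrite sz ltnW)).
  rewrite sz in j'n; exists (Ordinal j'n); by rewrite Hj Ej.
have Ew : word s = rot (n - k) (word t).
  have H := rot_back (w := word s) (k := k); rewrite sz in H.
  by rewrite E H // ltnW.
have szt : size (word t) = n by rewrite size_word.
rewrite Ew in Hj.
have [j' j'n Ej] := rot_closed (j := j) (k := n - k) (w := word t) (ltac:(by rewrite szt)) (ltac:(by rewrite szt ltnW)) (ltac:(by rewrite szt leq_subr)).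
rewrite szt in j'n; exists (Ordinal j'n); by rewrite Hj Ej.
Qed.

Unset Implicit Arguments.
Theorem theorem5p10 (n : nat) : 1 <= n -> #|Av_cyc n| = catalan n.-1.
Proof.
move=> n1.
pose B0 := [set s : 'S_n | ~~ cyc_contains s & head 1 (word s) == 0].
have E1 : Av_cyc n = (@cyc n) @: B0.
  apply/setP => C; apply/imsetP/imsetP => [[s]|[s]].
    rewrite inE => Hs ->.
    set w := word s.
    have z0 : 0 \in w by rewrite (perm_mem (word_perm s)) mem_iota.
    have kn : index 0 w < n by rewrite -(size_word s) index_mem.
    have Pr : perm_eq (rot (index 0 w) w) (iota 0 n) by rewrite perm_rot word_perm.
    have [t Et] := word_surj Pr.
    exists t; last by rewrite (cyc_rot n1 kn Et).
    rewrite inE Et (rot_index z0) /= eqxx andbT cyc_contains_bad Et.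
    by rewrite bad_rot ?word_uniq // -cyc_contains_bad.
  rewrite inE => /andP[Hs _] ->; exists s => //; by rewrite inE.
have inj : {in B0 &, injective (@cyc n)}.
  move=> s t; rewrite !inE => /andP[_ hs] /andP[_ ht] E.
  have : t \in cyc t by rewrite inE; apply/existsP; exists (Ordinal n1); rewrite rot0.
  rewrite -E inE => /existsP[k /eqP Ek].
  have w0 : 0 < size (word s) by rewrite size_word.
  have ks : k < size (word s) by rewrite size_word.
  have k0 : nat_of_ord k = 0.
    move: ht; rewrite Ek /rot (drop_nth 1 ks) /= => /eqP h1.
    apply/eqP; rewrite -(nth_uniq 1 ks w0 (word_uniq s)) h1.
    by move: hs; case: (word s) => //= x ? /eqP ->.
  by apply: word_inj; rewrite Ek k0 rot0.
rewrite E1 (card_in_imset inj) cardE -(size_map (@word n)) -(size_G n.-1).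
apply: perm_size; apply: uniq_perm.
- by rewrite map_inj_uniq ?enum_uniq //; exact: word_inj.
- exact: G_uniq.
move=> w; rewrite G_mem prednK //; apply/mapP/idP => [[s]|gw].
  rewrite mem_enum inE => /andP[hc hh] ->.
  by rewrite /good word_perm hh -cyc_contains_bad hc.
case/and3P: gw => P H B.
have [s Es] := word_surj P.
by exists s; rewrite // mem_enum inE cyc_contains_bad Es H B.
Qed.
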